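(* Let $\mathbb{F}$ be a finite field and $\alpha\in\mathbb{F}$ with $\mathrm{ord}(\alpha)=n$. Let $H\in\mathbb{F}[z]^{(n-1)\times n}$ be the matrix whose entry in row $i$ ($i=1,\ldots,n-1$) and column $j$ ($j=1,\ldots,n$) is $(z-\alpha^{n-j+1})^i$, i.e. \[ H=\begin{pmatrix} z-\alpha^n&z-\alpha^{n-1}&\cdots&z-\alpha\\ (z-\alpha^n)^2&(z-\alpha^{n-1})^2&\cdots&(z-\alpha)^2\\ \vdots&\vdots&&\vdots\\ (z-\alpha^n)^{n-1}&(z-\alpha^{n-1})^{n-1}&\cdots&(z-\alpha)^{n-1} \end{pmatrix}. \] Then (1) $H$ is right invertible, and (2) $GH^{\mathsf T}=0$ where $G=\sum_{\nu=0}^{n-1}z^\nu\begin{pmatrix}1&\alpha^\nu&\alpha^{2\nu}&\ldots&\alpha^{(n-1)\nu}\end{pmatrix}\in\mathbb{F}[z]^{1\times n}$. Consequently, $H$ is a parity check matrix of the convolutional code $\mathcal{C}=\mathrm{im}\,G$, i.e. $\mathcal{C}=\{v\in\mathbb{F}[z]^n\mid vH^{\mathsf T}=0\}$.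
   Context: $\mathrm{ord}(\alpha)$ is the multiplicative order of $\alpha$. A polynomial matrix $M\in\mathbb{F}[z]^{k\times n}$ is right invertible if $M\tilde M=I_k$ for some $\tilde M\in\mathbb{F}[z]^{n\times k}$. For a convolutional code $\mathcal{C}=\mathrm{im}\,G=\{uG\mid u\in\mathbb{F}[z]\}$ with right invertible $G\in\mathbb{F}[z]^{1\times n}$, a parity check matrix is a right invertible $H\in\mathbb{F}[z]^{(n-1)\times n}$ with $\mathcal{C}=\{v\in\mathbb{F}[z]^n\mid vH^{\mathsf T}=0\}$. *)

(* Defs.v *)
From HB Require Import structures.
From mathcomp Require Import all_boot all_order all_algebra all_field.
Set Implicit Arguments. Unset Strict Implicit. Unset Printing Implicit Defensive.
Import GRing.Theory.
Local Open Scope ring_scope.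

Definition right_invertible (R : nzRingType) (k n : nat) (M : 'M[{poly R}]_(k, n)) : Prop :=
  exists Mt : 'M[{poly R}]_(n, k), M *m Mt = 1%:M.

Definition conv_code (R : nzRingType) (n : nat) (G : 'rV[{poly R}]_n) : 'rV[{poly R}]_n -> Prop :=
  fun v => exists u : {poly R}, v = u *: G.

(* The matrix H: entry (i, j) (0-based, i < n-1, j < n) is (z - alpha^(n-j))^(i+1),
   i.e. row i+1, column j+1 of the paper's (z - alpha^(n-(j+1)+1))^(i+1). *)
Definition Hmat (F : fieldType) (n : nat) (alpha : F) : 'M[{poly F}]_(n.-1, n) :=
  \matrix_(i < n.-1, j < n) ('X - (alpha ^+ (n - j))%:P) ^+ i.+1.

Definition Gmat (F : fieldType) (n : nat) (alpha : F) : 'rV[{poly F}]_n :=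
  \sum_(nu < n) ('X ^+ nu) *: \row_(j < n) (alpha ^+ (j * nu))%:P.

(* Main.v *)
Require Import Defs.
From HB Require Import structures.
From mathcomp Require Import all_boot all_order all_algebra all_field.
From mathcomp Require Import ring.
Import GRing.Theory.
Local Open Scope ring_scope.


Lemma geom_mul {F : fieldType} (g : F) m :
  (g - 1) * \sum_(j < m) g ^+ j = g ^+ m - 1.
Proof.
elim: m => [|m IH]; first by rewrite big_ord0 mulr0 expr0 subrr.
by rewrite big_ord_recr /= mulrDr IH exprS; ring.
Qed.

Lemma geom0 {F : fieldType} (g : F) m : g ^+ m = 1 -> g != 1 ->
  \sum_(j < m) g ^+ j = 0.
Proof.
move=> gm g1; have := geom_mul g m; rewrite gm subrr => /eqP.
by rewrite mulf_eq0 subr_eq0 (negbTE g1) /= => /eqP.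
Qed.

Lemma beta_mul {F : fieldType} n (a : F) j : n.-primitive_root a -> (j <= n)%N ->
  a ^+ (n - j) * a ^+ j = 1.
Proof. by move=> pa hj; rewrite -exprD subnK // prim_expr_order. Qed.

Lemma beta_pow {F : fieldType} n (a : F) (j : nat) : n.-primitive_root a -> (j <= n)%N ->
  a ^+ (n - j) = (a ^+ (n - 1)) ^+ j.
Proof.
move=> pa hj; have n0 := prim_order_gt0 pa.
have a0 : a ^+ j != 0 by rewrite expf_neq0 // (prim_root_eq0 pa) -lt0n.
apply: (mulIf a0); rewrite beta_mul // -exprMn -exprSr subn1 prednK //. by rewrite (prim_expr_order pa) expr1n.
Qed.

Lemma rootsum {F : fieldType} n (a : F) (nu k : nat) : n.-primitive_root a ->
  (nu < n)%N -> (k < n)%N ->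
  \sum_(j < n) a ^+ (j * nu) * (a ^+ (n - j)) ^+ k = if nu == k then n%:R else 0.
Proof.
move=> pa hnu hk; have n0 := prim_order_gt0 pa.
set d := a ^+ (n - 1).
have ad : a * d = 1 by rewrite /d -exprS subn1 prednK // prim_expr_order.
have -> : \sum_(j < n) a ^+ (j * nu) * (a ^+ (n - j)) ^+ k
   = \sum_(j < n) (a ^+ nu * d ^+ k) ^+ j.
  apply: eq_bigr => j _; rewrite (@beta_pow _ n a j pa (ltnW (ltn_ord j))) -/d.
  by rewrite exprMn -!exprM (mulnC j nu) (mulnC j k).
case: eqP => [<-|/eqP nk].
  rewrite -exprMn ad expr1n.
  under eq_bigr do rewrite expr1n.
  by rewrite sumr_const card_ord.
apply: geom0.
  rewrite exprMn -!exprM (mulnC nu n) (mulnC k n) !exprM (prim_expr_order pa) /d.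
  by rewrite -(exprM a (n-1)%N n) (mulnC (n-1)%N n) exprM (prim_expr_order pa) !expr1n mulr1.
apply/eqP => h; move/eqP: nk; apply.
have : a ^+ nu == a ^+ k.
  by rewrite -[a ^+ k]mul1r -h -mulrA -exprMn (mulrC d) ad expr1n mulr1.
by rewrite (eq_prim_root_expr pa) !modn_small // => /eqP.
Qed.

Definition Hp {F : fieldType} n (a : F) : 'M[{poly F}]_n :=
  \matrix_(i < n, j < n) ('X - (a ^+ (n - j))%:P) ^+ i.

Lemma rearr {R : comNzRingType} (x y z w u : R) c :
  x * y * (w * u * z *+ c) = x * (w * u) *+ c * (y * z).
Proof. rewrite !(mulrnAr, mulrnAl); ring. Qed.

Lemma pick_sum {R : comNzRingType} n (f : nat -> R) c k : (k < n)%N ->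
  \sum_(nu < n) f nu * (if (nu == k :> nat) then c else 0) = f k * c.
Proof.
move=> hk; rewrite (bigD1 (Ordinal hk)) //= eqxx big1 ?addr0 //.
move=> nu /negbTE; rewrite -val_eqE /= => ->; by rewrite mulr0.
Qed.

Lemma GHp {F : fieldType} n (a : F) (pa : n.-primitive_root a) (i : 'I_n) :
  (Gmat n a *m (Hp n a)^T) 0 i = (n%:R)%:P * 0 ^+ i.
Proof.
rewrite !mxE.
have E : forall j : 'I_n, Gmat n a 0 j * (Hp n a)^T j i =
   \sum_(nu < n) \sum_(k < i.+1)
      ('X^nu * ((-1) ^+ k * 'X^(i - k)) *+ 'C(i, k)) *
      (a ^+ (j * nu) * (a ^+ (n - j)) ^+ k)%:P.
  move=> j; rewrite /Gmat summxE mxE /Hp mxE exprBn mulr_suml.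
  apply: eq_bigr => nu _; rewrite !mxE mulr_sumr; apply: eq_bigr => k _.
  by rewrite polyCM -polyC_exp rearr.
rewrite (eq_bigr _ (fun j _ => E j)) exchange_big /=.
under eq_bigr => nu _ do rewrite exchange_big /=.
rewrite exchange_big /=.
transitivity (\sum_(k < i.+1) ('X^k * ((-1) ^+ k * 'X^(i - k))) *+ 'C(i, k) * (n%:R)%:P : {poly F}).
  apply: eq_bigr => k _.
  have hk : (k < n)%N by apply: leq_trans (ltn_ord k) (ltn_ord i).
  rewrite -(@pick_sum _ n (fun nu : nat => ('X^nu * ((-1) ^+ k * 'X^(i - k))) *+ 'C(i, k)) _ k hk).
  apply: eq_bigr => nu _.
  rewrite -mulr_sumr -rmorph_sum (@rootsum _ n a nu k pa (ltn_ord nu) hk).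
  by case: eqP; rewrite ?rmorph0.
transitivity ((\sum_(k < i.+1) ((-1) ^+ k * 1 ^+ (i - k) * 1 ^+ k) *+ 'C(i, k)) * 'X^i * (n%:R)%:P : {poly F}).
  rewrite !mulr_suml; apply: eq_bigr => k _.
  have hk : (k <= i)%N by rewrite -ltnS ltn_ord.
  rewrite !expr1n !mulr1 mulrCA -exprD subnKC //.
  by rewrite [in RHS]mulrnAl.
rewrite -exprBn subrr.
clear E; case: i => [[|i'] hi] /=; first by rewrite !expr0 !mul1r mulr1.
by rewrite !exprS !mul0r mulr0.
Qed.

Lemma Hp_unit {F : fieldType} n (a : F) (pa : n.-primitive_root a) :
  Hp n a \in unitmx.
Proof.
have -> : Hp n a = Vandermonde n (\row_j ('X - (a ^+ (n - j))%:P)).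
  by apply/matrixP => i j; rewrite !mxE.
rewrite unitmxE det_Vandermonde.
apply: unitr_prod => i _; apply: unitr_prod => j hij.
rewrite !mxE opprB addrC addrA subrK -polyCB poly_unitE size_polyC coefC /= unitfE.
suff h : a ^+ (n - i) - a ^+ (n - j) != 0 by rewrite h.
rewrite subr_eq0; apply/eqP => e.
have a0 : a ^+ (n - j) != 0 by rewrite expf_neq0 // (prim_root_eq0 pa) -lt0n (prim_order_gt0 pa).
have : a ^+ i == a ^+ j.
  apply/eqP; apply: (mulfI a0).
  by rewrite -{1}e !beta_mul // ltnW.
by rewrite (eq_prim_root_expr pa) !modn_small // => /eqP /val_inj hij'; rewrite hij' ltnn in hij.
Qed.

Lemma HmatE {F : fieldType} m (a : F) (i : 'I_m) (j : 'I_m.+1) :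
  Hmat m.+1 a i j = Hp m.+1 a (lift ord0 i) j.
Proof. by rewrite !mxE lift0. Qed.

Lemma vHT {F : fieldType} m (a : F) (v : 'rV[{poly F}]_m.+1) (i : 'I_m) :
  (v *m (Hmat m.+1 a)^T) 0 i = (v *m (Hp m.+1 a)^T) 0 (lift ord0 i).
Proof. by rewrite !mxE; apply: eq_bigr => j _; rewrite !mxE lift0. Qed.

Theorem theorem3p1 (F : finFieldType) (n : nat) (alpha : F)
  (halpha : n.-primitive_root alpha) :
  right_invertible (Hmat n alpha)
  /\ Gmat n alpha *m (Hmat n alpha)^T = 0
  /\ (forall v : 'rV[{poly F}]_n,
        conv_code (Gmat n alpha) v <-> v *m (Hmat n alpha)^T = 0).
Proof.
case: n halpha => [|m] pa; first by have := prim_order_gt0 pa.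
have Hu := @Hp_unit _ m.+1 alpha pa.
have GH : Gmat m.+1 alpha *m (Hmat m.+1 alpha)^T = 0.
  by apply/rowP => i; rewrite vHT (@GHp _ m.+1 alpha pa) mxE /= exprS mul0r mulr0.
split.
  rewrite /right_invertible /=.
  pose Mt : 'M[{poly F}]_(m.+1, m) := \matrix_(j < m.+1, i < m) invmx (Hp m.+1 alpha) j (lift ord0 i).
  exists Mt.
  apply/matrixP => i k; rewrite [LHS]mxE.
  under eq_bigr => j _ do rewrite HmatE [Mt _ _]mxE.
  have := mulmxV Hu => /matrixP /(_ (lift ord0 i) (lift ord0 k)).
  rewrite [LHS]mxE => ->.
  by rewrite !mxE (inj_eq (@lift_inj _ ord0)).
split => // v; split.
  by case=> u ->; rewrite -scalemxAl GH scaler0.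
move=> vH.
have N0 : (m.+1)%:R != 0 :> F by apply: (prim_root_dvd_eq0 pa).
set u := ((m.+1)%:R^-1)%:P * (v *m (Hp m.+1 alpha)^T) 0 ord0.
exists u.
have Hu' : (Hp m.+1 alpha)^T \in unitmx by rewrite unitmx_tr.
have E : v *m (Hp m.+1 alpha)^T = u *: (Gmat m.+1 alpha *m (Hp m.+1 alpha)^T).
  apply/rowP => k; rewrite [RHS]mxE (@GHp _ m.+1 alpha pa).
  case: (unliftP ord0 k) => [i ->|->].
    rewrite -vHT vH mxE /= exprS mul0r !mulr0 //.
  rewrite expr0 mulr1 /u mulrAC -polyCM mulVf // mul1r //.
apply: (can_inj (mulmxK Hu')).
by rewrite E -scalemxAl.
Qed.
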